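(* Fix $\vartheta_1\in(0,\pi/2)$, $\varphi_1\in(0,\pi]$ and an integer $k\ge1$. Suppose $\eta_-<\eta_+$ are two points of $I_k$ with $\Phi(\eta_-)=\Phi(\eta_+)=\varphi_1$. Then $$\sin^2\vartheta_1\frac{\eta_-^2}{\sin^2\eta_-}<\sin^2\vartheta_1\frac{\eta_+^2}{\sin^2\eta_+}.$$
   Context: For integers $k\ge0$ let $I_k=[\vartheta_1+k\pi,(k+1)\pi-\vartheta_1]$. For $\eta\in I_k$ set $\gamma(\eta)=\sqrt{1-\sin^2\vartheta_1/\sin^2\eta}$ and $$\Phi(\eta)=-\eta\,\gamma(\eta)+k\pi+\arccos\Big(\frac{\cos(\eta-k\pi)}{\cos\vartheta_1}\Big),\qquad\arccos\in[0,\pi].$$ *)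

(* Defs.v *)
From Stdlib Require Import Reals.
Open Scope R_scope.

Definition in_Ik (theta1 : R) (k : nat) (eta : R) : Prop :=
  theta1 + INR k * PI <= eta <= (INR k + 1) * PI - theta1.

Definition gamma (theta1 eta : R) : R :=
  sqrt (1 - (sin theta1)^2 / (sin eta)^2).

Definition Phi (theta1 : R) (k : nat) (eta : R) : R :=
  - eta * gamma theta1 eta + INR k * PI
  + acos (cos (eta - INR k * PI) / cos theta1).

(* Main.v *)
Require Import Defs.
From Stdlib Require Import Reals Lra.
From Coquelicot Require Import Coquelicot.
Open Scope R_scope.


Lemma acos_ge1 x : 1 <= x -> acos x = 0.
Proof. intros H. unfold acos. destruct (Rle_dec x (-1)); [lra|]. destruct (Rle_dec 1 x); lra. Qed.

Lemma acos_cont1 : continuity_pt acos 1.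
Proof.
  unfold continuity_pt, continue_in, limit1_in, limit_in. intros eps Heps.
  pose proof PI_RGT_0 as HPI.
  set (e := Rmin eps (PI/2)).
  assert (He : 0 < e) by (unfold e; apply Rmin_pos; lra).
  assert (He2 : e <= PI/2) by (unfold e; apply Rmin_r).
  assert (He3 : e <= eps) by (unfold e; apply Rmin_l).
  assert (Hc : cos e < 1) by (rewrite <- cos_0; apply cos_decreasing_1; lra).
  exists (1 - cos e). split; [lra|].
  intros x [_ Hx]. simpl in *. unfold Rdist in *. rewrite acos_1.
  destruct (Rle_dec 1 x) as [H1|H1].
  - rewrite acos_ge1 by lra. rewrite Rminus_0_r, Rabs_R0. lra.
  - assert (Hx' : cos e < x) by (apply Rabs_def2 in Hx; lra).
    pose proof (acos_bound x) as Hb.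
    rewrite Rminus_0_r, Rabs_pos_eq by lra.
    destruct (Rlt_dec (acos x) e) as [Hl|Hl]; [lra|]. apply Rnot_lt_le in Hl.
    exfalso.
    assert (Hcc : cos (acos x) <= cos e).
    { destruct (Req_dec (acos x) e) as [Heq|Hne]; [rewrite Heq; lra|].
      left. apply cos_decreasing_1; lra. }
    pose proof (COS_bound e).
    rewrite cos_acos in Hcc; lra.
Qed.

Lemma acos_cont x : -1 <= x <= 1 -> continuity_pt acos x.
Proof.
  intros Hx.
  destruct (Req_dec x 1) as [->|H1]; [apply acos_cont1|].
  destruct (Req_dec x (-1)) as [->|H2].
  - assert (E : forall y, acos y = PI - comp acos Ropp y).
    { intros y. unfold comp. rewrite acos_opp. ring. }
    apply continuity_pt_locally_ext with (f := fun y => PI - comp acos Ropp y) (a := 1); [lra| intros y _; now rewrite E|].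
    apply continuity_pt_minus; [apply continuity_pt_const; intros ? ?; reflexivity|].
    apply continuity_pt_comp.
    + apply continuity_pt_opp, derivable_continuous_pt, derivable_pt_id.
    + replace (- -1) with 1 by ring. apply acos_cont1.
  - apply derivable_continuous_pt, derivable_pt_acos. lra.
Qed.


Lemma mvt_open f f' a b : a < b ->
  (forall c, a < c < b -> derivable_pt_lim f c (f' c)) ->
  (forall c, a <= c <= b -> continuity_pt f c) ->
  exists c, a < c < b /\ f b - f a = f' c * (b - a).
Proof.
  intros Hab Hd Hc.
  set (pr1 := fun c (P : a < c < b) => exist (fun l => derivable_pt_abs f c l) (f' c) (Hd c P) : derivable_pt f c).
  set (pr2 := fun c (P : a < c < b) => derivable_pt_id c).
  destruct (MVT f id a b pr1 pr2 Hab Hc) as [c [P HP]].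
  { intros; apply derivable_continuous_pt, derivable_pt_id. }
  exists c; split; [exact P|].
  unfold pr1, pr2 in HP. rewrite derive_pt_id in HP. simpl in HP. unfold id in HP.
  lra.
Qed.

Lemma incr_strict f f' a b : a < b ->
  (forall c, a < c < b -> derivable_pt_lim f c (f' c)) ->
  (forall c, a <= c <= b -> continuity_pt f c) ->
  (forall c, a < c < b -> 0 < f' c) -> f a < f b.
Proof.
  intros Hab Hd Hc Hp. destruct (mvt_open f f' a b Hab Hd Hc) as [c [Hc1 E]].
  specialize (Hp c Hc1). assert (0 < f' c * (b - a)) by (apply Rmult_lt_0_compat; lra). lra.
Qed.
Definition gm th T x := sqrt (1 - sin th ^2 / sin (x - T)^2).
Definition Af th T x := acos (cos (x - T) / cos th).

Lemma div_lt1 a b : 0 < b -> a < b -> a / b < 1.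
Proof. intros Hb Hab. apply (Rmult_lt_reg_r b); [lra|]. unfold Rdiv. rewrite Rmult_assoc, Rinv_l; lra. Qed.

Lemma D1 th T x : 0 < sin th < sin (x - T) ->
  is_derive (gm th T) x (sin th^2 * cos(x-T) / (sin(x-T)^3 * gm th T x)).
Proof.
  intros H. unfold gm.
  assert (Hq : 0 < 1 - sin th ^ 2 / sin (x - T) ^ 2).
  { assert (sin th ^2 < sin (x-T)^2) by nra.
    assert (sin th ^2 / sin (x-T)^2 < 1) by (apply div_lt1; nra). lra. }
  auto_derive.
  - unfold Rminus, Rdiv in *. set (s := sin th) in *. set (u := sin (x + - T)) in *.
    replace (s*(s*1)) with (s^2) by ring. replace (u*(u*1)) with (u^2) by ring.
    repeat split; try exact Hq. intro Hz. nra.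
  - unfold Rminus, Rdiv in *. set (s := sin th) in *. set (u := sin (x + - T)) in *.
    replace (s*(s*1)) with (s^2) by ring. replace (u*(u*1)) with (u^2) by ring.
    set (S := sqrt _).
    assert (0 < S) by (apply sqrt_lt_R0; exact Hq).
    assert (u <> 0) by lra.
    field. lra.
Qed.

Lemma D2 th T x : 0 < cos th -> 0 < sin th < sin (x - T) ->
  is_derive (Af th T) x (1 / gm th T x).
Proof.
  intros Hc H. unfold Af, gm.
  set (Q := 1 - sin th ^ 2 / sin (x - T) ^ 2).
  assert (Hq : 0 < Q).
  { assert (sin th ^2 < sin (x-T)^2) by nra.
    assert (sin th ^2 / sin (x-T)^2 < 1) by (apply div_lt1; nra). unfold Q; lra. }
  pose proof (sin2_cos2 th) as E1. pose proof (sin2_cos2 (x - T)) as E2.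
  unfold Rsqr in E1, E2.
  set (u := cos (x - T) / cos th).
  assert (Hu : -1 < u < 1).
  { assert (Hcc : cos (x-T) * cos (x-T) < cos th * cos th) by nra.
    assert (Hb : - cos th < cos (x-T) < cos th) by nra.
    unfold u; split.
    - apply (Rmult_lt_reg_r (cos th)); [lra|]. unfold Rdiv. rewrite Rmult_assoc, Rinv_l; lra.
    - apply (Rmult_lt_reg_r (cos th)); [lra|]. unfold Rdiv. rewrite Rmult_assoc, Rinv_l; lra. }
  assert (Hsq : sqrt (1 - u²) = sin (x - T) / cos th * sqrt Q).
  { assert (E : 1 - u² = (sin (x - T) / cos th)² * Q).
    { unfold u, Q, Rsqr.
      replace (1 - cos (x - T) / cos th * (cos (x - T) / cos th)) with ((cos th * cos th - cos (x-T) * cos (x-T))/(cos th * cos th)) by (field; lra).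
      replace (sin (x - T) / cos th * (sin (x - T) / cos th) * (1 - sin th ^ 2 / sin (x - T) ^ 2)) with ((sin (x-T) * sin (x-T) - sin th * sin th)/(cos th * cos th)) by (field; split; lra).
      f_equal. lra. }
    rewrite E, sqrt_mult, sqrt_Rsqr; [reflexivity| |apply Rle_0_sqr|lra].
    unfold Rdiv. apply Rmult_le_pos; [lra|]. left; apply Rinv_0_lt_compat; lra. }
  assert (Hd : derivable_pt_lim acos u (-1 / sqrt (1 - u²))).
  { apply (derive_pt_eq_1 _ _ _ (derivable_pt_acos u Hu)). apply derive_pt_acos. }
  apply is_derive_Reals in Hd.
  assert (Hg : is_derive (fun y => cos (y - T) / cos th) x (- sin (x - T) / cos th)).
  { auto_derive. lra. unfold Rminus. field. lra. }
  pose proof (is_derive_comp acos (fun y => cos (y - T) / cos th) x _ _ Hd Hg) as HH.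
  replace (1 / sqrt Q) with (scal (- sin (x - T) / cos th) (-1 / sqrt (1 - u²))).
  { exact HH. }
  rewrite Hsq. unfold scal; simpl; unfold mult; simpl.
  assert (0 < sqrt Q) by (apply sqrt_lt_R0; exact Hq).
  field. repeat split; lra.
Qed.

Lemma cont_ed f x : ex_derive f x -> continuity_pt f x.
Proof. intros H. apply continuity_pt_filterlim. apply (ex_derive_continuous f x H). Qed.

Lemma cont_gm th T x : sin (x - T) <> 0 -> sin th ^2 <= sin (x - T) ^2 -> continuity_pt (gm th T) x.
Proof.
  intros H1 H2. unfold gm.
  apply (continuity_pt_comp (fun y => 1 - sin th ^ 2 / sin (y - T) ^ 2) sqrt).
  - apply cont_ed. auto_derive. intro Hz. apply H1. unfold Rminus. rewrite Rmult_1_r in Hz. apply Rmult_integral in Hz. lra.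
  - apply continuity_pt_sqrt.
    assert (sin th ^2 / sin (x-T)^2 <= 1).
    { destruct (Req_dec (sin th ^2) (sin (x - T)^2)) as [E|E].
      - rewrite E. right. field. auto.
      - left. apply div_lt1; [|lra]. assert (0 <= sin (x-T)^2) by nra. assert (sin (x - T)^2 <> 0) by (intro; apply H1; nra). lra. }
    lra.
Qed.

Lemma cont_Af th T x : 0 < cos th -> -1 <= cos (x - T) / cos th <= 1 -> continuity_pt (Af th T) x.
Proof.
  intros Hc Hu. unfold Af.
  apply (continuity_pt_comp (fun y => cos (y - T) / cos th) acos).
  - apply cont_ed. auto_derive. lra.
  - apply acos_cont. exact Hu.
Qed.

Lemma sin_shift k x : sin x ^ 2 = sin (x - INR k * PI) ^ 2.
Proof.
  induction k as [|k IH].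
  - simpl INR. replace (x - 0 * PI) with x by ring. reflexivity.
  - rewrite IH. rewrite S_INR.
    replace (x - INR k * PI) with ((x - (INR k + 1) * PI) + PI) by ring.
    rewrite neg_sin. ring.
Qed.

Lemma sin_lb_strict th t : 0 < th < PI / 2 -> th < t < PI - th -> sin th < sin t.
Proof.
  intros Hth Ht. pose proof PI_RGT_0 as HPI.
  destruct (Rle_dec t (PI/2)) as [H|H].
  - apply sin_increasing_1; lra.
  - rewrite <- (sin_PI_x t). apply sin_increasing_1; lra.
Qed.

Lemma sin_lb th t : 0 < th < PI / 2 -> th <= t <= PI - th -> sin th <= sin t.
Proof.
  intros Hth Ht.
  destruct (Req_dec t th) as [->|H1]; [lra|].
  destruct (Req_dec t (PI - th)) as [->|H2]; [rewrite sin_PI_x; lra|].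
  left; apply sin_lb_strict; lra.
Qed.

Definition hf th T x := x * gm th T x - Af th T x.
Definition Gf th T c x := x * x - (c + Af th T x) * (c + Af th T x).
Definition pf T x := sin (x - T) - x * cos (x - T).

Section Main.
Variables th T : R.
Hypothesis Hth : 0 < th < PI / 2.
Hypothesis HT : 0 <= T.

Let Hc : 0 < cos th.
Proof. apply cos_gt_0; lra. Qed.
Let Hs : 0 < sin th.
Proof. apply sin_gt_0; lra. Qed.

Lemma sin_dom x : th <= x - T <= PI - th -> sin th <= sin (x - T).
Proof. intros; apply sin_lb; auto. Qed.

Lemma sin_int x : th < x - T < PI - th -> sin th < sin (x - T).
Proof. intros; apply sin_lb_strict; auto. Qed.

Lemma u_dom x : th <= x - T <= PI - th -> -1 <= cos (x - T) / cos th <= 1.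
Proof.
  intros H. pose proof (sin_dom x H) as Hsd.
  pose proof (sin2_cos2 th) as E1. pose proof (sin2_cos2 (x - T)) as E2.
  unfold Rsqr in E1, E2.
  assert (Hcc : cos (x-T) * cos (x-T) <= cos th * cos th) by nra.
  assert (Hb : - cos th <= cos (x-T) <= cos th) by nra.
  split.
  - apply (Rmult_le_reg_r (cos th)); [lra|]. unfold Rdiv. rewrite Rmult_assoc, Rinv_l; lra.
  - apply (Rmult_le_reg_r (cos th)); [lra|]. unfold Rdiv. rewrite Rmult_assoc, Rinv_l; lra.
Qed.

Lemma cont_hf x : th <= x - T <= PI - th -> continuity_pt (hf th T) x.
Proof.
  intros H. pose proof (sin_dom x H).
  unfold hf. apply continuity_pt_minus.
  - apply continuity_pt_mult.
    + apply derivable_continuous_pt, derivable_pt_id.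
    + apply cont_gm; nra.
  - apply cont_Af; auto. apply u_dom; auto.
Qed.

Lemma cont_Gf c x : th <= x - T <= PI - th -> continuity_pt (Gf th T c) x.
Proof.
  intros H. pose proof (sin_dom x H).
  assert (HA : continuity_pt (Af th T) x) by (apply cont_Af; auto; apply u_dom; auto).
  assert (HcA : continuity_pt (fun y => c + Af th T y) x).
  { apply continuity_pt_plus; auto. apply continuity_pt_const. intros ? ?; reflexivity. }
  unfold Gf. apply continuity_pt_minus.
  - apply continuity_pt_mult; apply derivable_continuous_pt, derivable_pt_id.
  - apply continuity_pt_mult; auto.
Qed.

Lemma der_hf x : th < x - T < PI - th ->
  derivable_pt_lim (hf th T) x (sin th ^ 2 * (x * cos (x - T) - sin (x - T)) / (sin (x - T) ^ 3 * gm th T x)).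
Proof.
  intros H. pose proof (sin_int x H) as Hsi.
  assert (D1' := D1 th T x (conj Hs Hsi)). apply is_derive_Reals in D1'.
  assert (D2' := D2 th T x Hc (conj Hs Hsi)). apply is_derive_Reals in D2'.
  pose proof (derivable_pt_lim_mult id (gm th T) x 1 _ (derivable_pt_lim_id x) D1') as Hm.
  pose proof (derivable_pt_lim_minus _ _ x _ _ Hm D2') as Hmm.
  match type of Hmm with derivable_pt_lim _ _ ?l => replace (sin th ^ 2 * (x * cos (x - T) - sin (x - T)) / (sin (x - T) ^ 3 * gm th T x)) with l end.
  { exact Hmm. }
  unfold id. unfold gm.
  set (Q := 1 - sin th ^ 2 / sin (x - T) ^ 2).
  assert (Hq : 0 < Q).
  { assert (sin th ^2 < sin (x-T)^2) by nra.
    assert (sin th ^2 / sin (x-T)^2 < 1) by (apply div_lt1; nra). unfold Q; lra. }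
  assert (Hsq : sqrt Q * sqrt Q = Q) by (apply sqrt_sqrt; lra).
  assert (0 < sqrt Q) by (apply sqrt_lt_R0; exact Hq).
  set (S := sqrt Q) in *.
  apply Rminus_diag_uniq.
  assert (Hσ : sin (x - T) <> 0) by lra.
  transitivity ((S * S - (1 - sin th ^ 2 / sin (x - T) ^ 2)) / S).
  { field. auto with real. }
  fold Q. rewrite Hsq. field. lra.
Qed.

Lemma der_Gf c x : th < x - T < PI - th ->
  derivable_pt_lim (Gf th T c) x (2 * x - 2 * (c + Af th T x) * (1 / gm th T x)).
Proof.
  intros H. pose proof (sin_int x H) as Hsi.
  assert (D2' := D2 th T x Hc (conj Hs Hsi)). apply is_derive_Reals in D2'.
  pose proof (derivable_pt_lim_plus (fun _ => c) (Af th T) x 0 _ (derivable_pt_lim_const c x) D2') as Hp.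
  pose proof (derivable_pt_lim_mult _ _ x _ _ Hp Hp) as Hm.
  pose proof (derivable_pt_lim_mult id id x _ _ (derivable_pt_lim_id x) (derivable_pt_lim_id x)) as Hi.
  pose proof (derivable_pt_lim_minus _ _ x _ _ Hi Hm) as Hmm.
  match type of Hmm with derivable_pt_lim _ _ ?l => replace (2 * x - 2 * (c + Af th T x) * (1 / gm th T x)) with l end.
  { exact Hmm. }
  unfold id, plus_fct. ring.
Qed.

Lemma der_pf x : derivable_pt_lim (pf T) x (x * sin (x - T)).
Proof.
  apply is_derive_Reals. unfold pf. auto_derive; auto. unfold Rminus. ring.
Qed.

Lemma pf_incr a b : th <= a - T -> a < b -> b - T <= PI - th -> pf T a < pf T b.
Proof.
  intros Ha Hab Hb.
  apply (incr_strict (pf T) (fun x => x * sin (x - T))); auto.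
  - intros; apply der_pf.
  - intros. apply derivable_continuous_pt. exact (exist _ _ (der_pf c)).
  - intros y Hy. apply Rmult_lt_0_compat; [lra|]. apply (Rlt_trans _ (sin th)); auto. apply sin_int; lra.
Qed.

Lemma hf_incr a b : th <= a - T -> a < b -> b - T <= PI - th ->
  (forall y, a < y < b -> pf T y < 0) -> hf th T a < hf th T b.
Proof.
  intros Ha Hab Hb Hp.
  apply (incr_strict (hf th T) (fun x => sin th ^ 2 * (x * cos (x - T) - sin (x - T)) / (sin (x - T) ^ 3 * gm th T x)) a b Hab).
  - intros; apply der_hf; lra.
  - intros; apply cont_hf; lra.
  - intros y Hy. assert (HI : th < y - T < PI - th) by lra. pose proof (sin_int y HI).
    specialize (Hp y Hy). unfold pf in Hp.
    assert (0 < gm th T y).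
    { unfold gm. apply sqrt_lt_R0. assert (sin th ^2 < sin (y-T)^2) by nra.
      assert (sin th ^2 / sin (y-T)^2 < 1) by (apply div_lt1; nra). lra. }
    unfold Rdiv. apply Rmult_lt_0_compat.
    + apply Rmult_lt_0_compat; [nra|lra].
    + apply Rinv_0_lt_compat. apply Rmult_lt_0_compat; [|lra]. apply pow_lt; lra.
Qed.

Lemma hf_decr a b : th <= a - T -> a < b -> b - T <= PI - th ->
  (forall y, a < y < b -> 0 < pf T y) -> hf th T b < hf th T a.
Proof.
  intros Ha Hab Hb Hp.
  apply Ropp_lt_cancel.
  apply (incr_strict (fun x => - hf th T x) (fun x => - (sin th ^ 2 * (x * cos (x - T) - sin (x - T)) / (sin (x - T) ^ 3 * gm th T x))) a b Hab).
  - intros. apply derivable_pt_lim_opp with (f := hf th T). apply der_hf; lra.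
  - intros. apply continuity_pt_opp with (f := hf th T). apply cont_hf; lra.
  - intros y Hy. assert (HI : th < y - T < PI - th) by lra. pose proof (sin_int y HI).
    specialize (Hp y Hy). unfold pf in Hp.
    assert (0 < gm th T y).
    { unfold gm. apply sqrt_lt_R0. assert (sin th ^2 < sin (y-T)^2) by nra.
      assert (sin th ^2 / sin (y-T)^2 < 1) by (apply div_lt1; nra). lra. }
    assert (HD : 0 < / (sin (y - T) ^ 3 * gm th T y)).
    { apply Rinv_0_lt_compat. apply Rmult_lt_0_compat; [|lra]. apply pow_lt; lra. }
    assert (HN : 0 < sin th ^ 2 * (sin (y - T) - y * cos (y - T))) by (apply Rmult_lt_0_compat; nra).
    unfold Rdiv. set (iD := / (sin (y - T) ^ 3 * gm th T y)) in *. nra.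
Qed.

Lemma Gf_val c x : th <= x - T <= PI - th -> hf th T x = c ->
  Gf th T c x = sin th ^ 2 * (x ^ 2 / sin (x - T) ^ 2).
Proof.
  intros H Hh. pose proof (sin_dom x H).
  assert (E : c + Af th T x = x * gm th T x) by (unfold hf in Hh; lra).
  unfold Gf. rewrite E.
  assert (Hq : 0 <= 1 - sin th ^ 2 / sin (x - T) ^ 2).
  { destruct (Req_dec (sin th ^2) (sin (x - T)^2)) as [E'|E'].
    - rewrite E'. right. field. lra.
    - left. assert (sin th ^ 2 / sin (x - T) ^ 2 < 1) by (apply div_lt1; nra). lra. }
  assert (Hg : gm th T x * gm th T x = 1 - sin th ^ 2 / sin (x - T) ^ 2) by (unfold gm; apply sqrt_sqrt; exact Hq).
  replace (x * gm th T x * (x * gm th T x)) with (x * x * (gm th T x * gm th T x)) by ring.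
  rewrite Hg. field. lra.
Qed.
End Main.

Theorem lemma5p52 (theta1 phi1 : R) (k : nat) (eta_m eta_p : R) :
  0 < theta1 < PI / 2 ->
  0 < phi1 <= PI ->
  (1 <= k)%nat ->
  in_Ik theta1 k eta_m -> in_Ik theta1 k eta_p ->
  eta_m < eta_p ->
  Phi theta1 k eta_m = phi1 -> Phi theta1 k eta_p = phi1 ->
  (sin theta1)^2 * (eta_m^2 / (sin eta_m)^2)
    < (sin theta1)^2 * (eta_p^2 / (sin eta_p)^2).
Proof.
  intros Hth Hphi Hk Hm Hp Hlt Em Ep.
  assert (HPhi : forall x, Phi theta1 k x = INR k * PI - hf theta1 (INR k * PI) x).
  { intros x. unfold Phi, gamma, hf, gm, Af. rewrite (sin_shift k x). ring. }
  rewrite (sin_shift k eta_m), (sin_shift k eta_p).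
  set (T := INR k * PI) in *.
  assert (HT : 0 <= T) by (unfold T; apply Rmult_le_pos; [apply pos_INR | left; apply PI_RGT_0]).
  unfold in_Ik in Hm, Hp. rewrite Rmult_plus_distr_r, Rmult_1_l in Hm, Hp. fold T in Hm, Hp.
  assert (Dm : theta1 <= eta_m - T <= PI - theta1) by lra.
  assert (Dp : theta1 <= eta_p - T <= PI - theta1) by lra.
  set (c := T - phi1).
  assert (hm : hf theta1 T eta_m = c) by (unfold c; rewrite HPhi in Em; lra).
  assert (hp : hf theta1 T eta_p = c) by (unfold c; rewrite HPhi in Ep; lra).
  assert (Hgt : forall x, eta_m < x < eta_p -> c < hf theta1 T x).
  { intros x Hx. destruct (Rle_dec (pf T x) 0) as [Hpx|Hpx].
    - rewrite <- hm. apply hf_incr; try lra.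
      intros y Hy. pose proof (pf_incr theta1 T Hth HT y x ltac:(lra) ltac:(lra) ltac:(lra)). lra.
    - rewrite <- hp. apply hf_decr; try lra.
      intros y Hy. pose proof (pf_incr theta1 T Hth HT x y ltac:(lra) ltac:(lra) ltac:(lra)). lra. }
  rewrite <- (Gf_val theta1 T Hth c eta_m Dm hm), <- (Gf_val theta1 T Hth c eta_p Dp hp).
  apply (incr_strict (Gf theta1 T c) (fun x => 2 * x - 2 * (c + Af theta1 T x) * (1 / gm theta1 T x)) _ _ Hlt).
  - intros; apply der_Gf; auto; lra.
  - intros; apply cont_Gf; auto; lra.
  - intros y Hy. specialize (Hgt y Hy). unfold hf in Hgt.
    assert (HI : theta1 < y - T < PI - theta1) by lra.
    pose proof (sin_int theta1 T Hth y HI).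
    assert (Hs : 0 < sin theta1) by (apply sin_gt_0; lra).
    assert (Hg : 0 < gm theta1 T y).
    { unfold gm. apply sqrt_lt_R0. assert (sin theta1 ^2 < sin (y-T)^2) by nra.
      assert (sin theta1 ^2 / sin (y-T)^2 < 1) by (apply div_lt1; nra). lra. }
    assert (Hlt2 : (c + Af theta1 T y) * (1 / gm theta1 T y) < y).
    { apply (Rmult_lt_reg_r (gm theta1 T y)); [exact Hg|].
      replace ((c + Af theta1 T y) * (1 / gm theta1 T y) * gm theta1 T y) with (c + Af theta1 T y) by (field; lra).
      lra. }
    lra.
Qed.
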